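(* Assume $\mathfrak p<\mathfrak t$ and let $\lambda=\mathfrak p$. Let $\mathcal B\subseteq[\omega]^{\aleph_0}$ exemplify $\mathfrak p$. Then there exist a regular cardinal $\kappa<\lambda$ and a $\subseteq^*$-decreasing sequence $\langle A_i:i<\kappa\rangle$ of members of $[\omega]^{\aleph_0}$ (i.e. $A_j\subseteq^* A_i$ for $i<j<\kappa$) such that (a) $A_i\cap B$ is infinite for every $i<\kappa$ and every $B\in\mathcal B$, and (b) if $A\in[\omega]^{\aleph_0}$ is a pseudo-intersection of $\{A_i:i<\kappa\}$, then $A\cap B$ is finite for some $B\in\mathcal B$.
   Context: $[\omega]^{\aleph_0}$ is the set of infinite subsets of $\omega$; for $A,B\subseteq\omega$, $A\subseteq^* B$ means $A\setminus B$ is finite. A set $A\in[\omega]^{\aleph_0}$ is a pseudo-intersection of a family $\mathcal C\subseteq[\omega]^{\aleph_0}$ if $A\subseteq^* C$ for all $C\in\mathcal C$. A tower is a sequence $\langle X_\alpha:\alpha<\kappa\rangle\subseteq[\omega]^{\aleph_0}$ with $X_\beta\subseteq^*X_\alpha$ for $\alpha<\beta<\kappa$ and such that $\{X_\alpha:\alpha<\kappa\}$ has no pseudo-intersection. $\mathfrak p$ is the least cardinality of a family $\mathcal B\subseteq[\omega]^{\aleph_0}$ all of whose finite subfamilies have infinite intersection but which has no pseudo-intersection; $\mathfrak t$ is the least length of a tower. A family $\mathcal B\subseteq[\omega]^{\aleph_0}$ exemplifies $\mathfrak p$ if it is closed under finite intersections, has no pseudo-intersection, and $|\mathcal B|=\mathfrak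 p$. *)

(* Defs.v *)
From mathcomp Require Import all_boot.
From mathcomp Require Import boolp classical_sets functions cardinality.
Set Implicit Arguments. Unset Strict Implicit. Unset Printing Implicit Defensive.
Local Open Scope classical_set_scope.
Local Open Scope card_scope.

Definition infsub (A : set nat) : Prop := infinite_set A.

Definition subseteq_star (A B : set nat) : Prop := finite_set (A `\` B).

Definition pseudo_int (A : set nat) (C : set (set nat)) : Prop :=
  infsub A /\ forall X, C X -> subseteq_star A X.

Definition has_pseudo_int (C : set (set nat)) : Prop :=
  exists A, pseudo_int A C.

(* strong finite intersection property: every finite subfamily has infinite
   intersection (the empty subfamily has intersection omega) *)
Definition sfip (C : set (set nat)) : Prop :=
  forall s : seq (set nat), (forall X, X \in s -> C X) ->
    infinite_set (\bigcap_(X in [set Y | Y \in s]) X).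

Definition strict_wellorder (I : Type) (ltI : I -> I -> Prop) : Prop :=
  well_founded ltI /\
  (forall i j k, ltI i j -> ltI j k -> ltI i k) /\
  (forall i j, ltI i j \/ i = j \/ ltI j i).

Definition starDecreasing (I : Type) (ltI : I -> I -> Prop) (X : I -> set nat)
  : Prop :=
  (forall i, infsub (X i)) /\ (forall i j, ltI i j -> subseteq_star (X j) (X i)).

Definition tower (I : Type) (ltI : I -> I -> Prop) (X : I -> set nat) : Prop :=
  strict_wellorder ltI /\ starDecreasing ltI X /\
  ~ has_pseudo_int (range X).

(* B exemplifies p: B ⊆ [omega]^{aleph_0}, closed under finite intersections,
   has no pseudo-intersection, and |B| = p, i.e. |B| is at most the size of
   every family with the SFIP but no pseudo-intersection. *)
Definition exemplifies_p (B : set (set nat)) : Prop :=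
  (forall X, B X -> infsub X) /\
  (forall X Y, B X -> B Y -> B (X `&` Y)) /\
  ~ has_pseudo_int B /\
  (forall C : set (set nat), (forall X, C X -> infsub X) -> sfip C ->
     ~ has_pseudo_int C -> B #<= C).

(* p < t, phrased with a family B of size p: every tower (of any ordinal
   length) has length of cardinality strictly greater than |B|. *)
Definition p_lt_t_wrt (B : set (set nat)) : Prop :=
  forall (I : Type) (ltI : I -> I -> Prop) (X : I -> set nat),
    tower ltI X -> ~ ([set: I] #<= B).

(* (K, ltK) is (a well-order of order type) an infinite regular cardinal:
   initial ordinal (every proper initial segment has smaller cardinality),
   and every cofinal subset has full cardinality. *)
Definition regular_cardinal (K : Type) (ltK : K -> K -> Prop) : Prop :=
  strict_wellorder ltK /\
  infinite_set [set: K] /\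
  (forall i : K, ~ ([set: K] #<= [set j | ltK j i])) /\
  (forall S : set K, (forall i, exists2 j, S j & ~ ltK j i) ->
     [set: K] #<= S).

(* Main.v *)
Require Import Defs.
From mathcomp Require Import all_boot.
From mathcomp Require Import boolp classical_sets functions cardinality.
From mathcomp Require Import wochoice.
From Stdlib Require Import Wellfounded.
Local Open Scope classical_set_scope.
Local Open Scope card_scope.

Set Implicit Arguments. Unset Strict Implicit. Unset Printing Implicit Defensive.

Definition epsd {T : Type} (d : T) (Q : T -> Prop) : T :=
  match pselect (exists x, Q x) with
  | left H => proj1_sig (cid H)
  | right _ => d end.

Lemma epsd_spec T (d : T) (Q : T -> Prop) : (exists x, Q x) -> Q (epsd d Q).
Proof.
move=> H; rewrite /epsd; case: pselect => [H'|//].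
exact: proj2_sig (cid H').
Qed.

Lemma wf_min T (R : T -> T -> Prop) (P : T -> Prop) : well_founded R ->
  (exists x, P x) -> exists x, P x /\ forall y, R y x -> ~ P y.
Proof.
move=> wf [x Px]; apply: contrapT => hn; move: Px; elim/(well_founded_ind wf): x.
move=> x IH Px; apply: hn; exists x; split=> // y Ryx Py; exact: IH y Ryx Py.
Qed.

Lemma wf_rec (T A : Type) (R : T -> T -> Prop) : well_founded R -> (T -> A) ->
  forall F : T -> (T -> A) -> A,
  (forall x f g, (forall y, R y x -> f y = g y) -> F x f = F x g) ->
  exists c : T -> A, forall x, c x = F x c.
Proof.
move=> wf a F Fext.
pose G x (rec : forall y, R y x -> A) :=
  F x (fun y => match pselect (R y x) with left H => rec y H | right _ => a y end).
have Gext : forall x f g, (forall y p, f y p = g y p) -> G x f = G x g.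
  move=> x f g fg; rewrite /G; apply: Fext => y Ryx.
  by case: pselect => // H; rewrite fg.
exists (Fix wf (fun _ => A) G) => x; rewrite (Fix_eq wf (fun _ => A) G Gext).
rewrite /G; apply: Fext => y Ryx; by case: pselect.
Qed.

Lemma card_le_fun T U (A : set T) (B : set U) (f : T -> U) :
  (forall x, A x -> B (f x)) ->
  (forall x y, A x -> A y -> f x = f y -> x = y) -> A #<= B.
Proof.
move=> fAB finj.
have e : f @` A #= A.
  apply: inj_card_eq => x y; rewrite !in_setE; exact: finj.
rewrite -(card_le_eql e); apply: subset_card_le => _ [x Ax <-]; exact: fAB.
Qed.

Lemma card_le_getfun T U (A : set T) (B : set U) (u0 : U) : A #<= B ->
  exists f : T -> U, (forall x, A x -> B (f x)) /\
  (forall x y, A x -> A y -> f x = f y -> x = y).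
Proof.
move=> /card_leP [g].
exists (fun x => match pselect (A x) with
          | left H => val (g (exist _ x (mem_set H))) | right _ => u0 end).
split.
  move=> x Ax; case: pselect => // H; exact: set_mem (valP (g _)).
move=> x y Ax Ay; case: pselect => // Hx; case: pselect => // Hy.
move=> /val_inj /(@injT _ _ g) h.
by move: (congr1 val h).
Qed.

Lemma sstar_trans (X Y Z : set nat) :
  subseteq_star X Y -> subseteq_star Y Z -> subseteq_star X Z.
Proof.
rewrite /subseteq_star => h1 h2.
apply: (@sub_finite_set _ _ ((X `\` Y) `|` (Y `\` Z))); last by rewrite finite_setU.
move=> x [Xx nZx]; have [Yx|nYx] := pselect (Y x); [by right|by left].
Qed.

Lemma sstar_sub (X Y : set nat) : X `<=` Y -> subseteq_star X Y.
Proof.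
move=> h; rewrite /subseteq_star.
apply: (@sub_finite_set _ _ set0); last exact: finite_set0.
by move=> x [/h].
Qed.

Section SWO.
Variables (I : Type) (lt : I -> I -> Prop).
Hypothesis swo : strict_wellorder lt.

Lemma swo_wf : well_founded lt. Proof. by case: swo. Qed.
Lemma swo_trans x y z : lt x y -> lt y z -> lt x z.
Proof. by case: swo => _ [h _]; apply: h. Qed.
Lemma swo_total x y : lt x y \/ x = y \/ lt y x.
Proof. by case: swo => _ [_ h]; apply: h. Qed.
Lemma swo_irr x : ~ lt x x.
Proof.
elim: (swo_wf x) => y _ IH hy.
exact: (IH y hy hy).
Qed.
Lemma swo_asym x y : lt x y -> ~ lt y x.
Proof. by move=> h1 h2; apply: (@swo_irr x); apply: swo_trans h1 h2. Qed.

Definition least (Q : I -> Prop) (d : I) : I :=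
  match pselect (exists x, Q x) with
  | left H => proj1_sig (cid (wf_min swo_wf H))
  | right _ => d end.

Lemma least_spec Q d : (exists x, Q x) ->
  Q (least Q d) /\ forall y, lt y (least Q d) -> ~ Q y.
Proof.
move=> H; rewrite /least; case: pselect => [H'|//].
exact: (proj2_sig (cid (wf_min swo_wf H'))).
Qed.

Lemma least_le Q d x : Q x -> lt (least Q d) x \/ least Q d = x.
Proof.
move=> Qx; have [_ h] := least_spec d (ex_intro _ x Qx).
have [h1|[h1|h1]] := swo_total (least Q d) x; [by left|by right|].
by have := h x h1.
Qed.
End SWO.

Lemma swo_sub (T : Type) (lt : T -> T -> Prop) (P : set T) :
  strict_wellorder lt -> strict_wellorder (fun a b : P => lt (val a) (val b)).
Proof.
move=> swo; split; first exact: wf_inverse_image (swo_wf swo).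
split; first by move=> i j k; apply: swo_trans.
move=> i j; have [h|[h|h]] := swo_total swo (val i) (val j).
- by left.
- by right; left; apply: val_inj.
- by right; right.
Qed.

Definition below (I : Type) (lt : I -> I -> Prop) (u : option I) : set I :=
  fun x => match u with Some v => lt x v | None => True end.

Section Collapse.
Variables (I : Type) (lt : I -> I -> Prop).
Hypothesis swo : strict_wellorder lt.

Lemma collapse (S : set I) : exists c : I -> I,
  (forall s t, S s -> S t -> lt t s -> lt (c t) (c s)) /\
  (forall s x, S s -> lt x (c s) -> exists t, S t /\ c t = x).
Proof.
pose Pc (f : I -> I) s x := forall t, S t -> lt t s -> lt (f t) x.
pose F s f := least swo (Pc f s) s.
have Fext : forall s f g, (forall y, lt y s -> f y = g y) -> F s f = F s g.
  move=> s f g fg; rewrite /F; congr least.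
  apply: funext => x; apply: propext; split=> h t St lts.
    by rewrite -fg //; apply: h.
  by rewrite fg //; apply: h.
have [c cE] := wf_rec (swo_wf swo) id Fext.
have le_self : forall s, S s -> lt (c s) s \/ c s = s.
  move=> s; elim: (swo_wf swo s) => {}s _ IH Ss.
  rewrite cE /F; apply: least_le => t St lts.
  have [h|h] := IH t lts St; [exact: swo_trans h lts| by rewrite h].
have exP : forall s, S s -> exists x, Pc c s x.
  move=> s Ss; exists s => t St lts.
  have [h|h] := le_self t St; [exact: swo_trans h lts| by rewrite h].
have spec : forall s, S s -> Pc c s (c s) /\ forall y, lt y (c s) -> ~ Pc c s y.
  by move=> s Ss; rewrite cE; apply: least_spec; apply: exP.
exists c; split.
  by move=> s t Ss St lts; have [h _] := spec s Ss; apply: h.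
move=> s; elim: (swo_wf swo s) => {}s _ IH x Ss lxs.
have [_ h] := spec s Ss; have {h}h := h x lxs.
apply: contrapT => H; apply: h => t St lts; apply: contrapT => nlt.
have [h1|[h1|h1]] := swo_total swo (c t) x.
- by apply: nlt.
- by apply: H; exists t.
- by apply: H; apply: (IH t lts x St h1).
Qed.

Lemma key (u : option I) (S : set I) :
  below lt u #<= S \/ exists x, below lt u x /\ S #<= below lt (Some x).
Proof.
have [c [cmono cdown]] := collapse S.
have [H|H] := pselect (forall x, below lt u x -> exists t, S t /\ c t = x).
  left; apply: (@card_le_trans _ _ _ (c @` S)); last exact: card_image_le.
  apply: subset_card_le => x /H [t [St <-]]; by exists t.
right; have [x [bx nx]] : exists x, below lt u x /\ ~ exists t, S t /\ c t = x.
  apply: contrapT => H'; apply: H => x bx; apply: contrapT => nx.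
  by apply: H'; exists x.
exists x; split => //; apply: (@card_le_fun _ _ _ _ c).
  move=> s Ss /=; have [h|[h|h]] := swo_total swo (c s) x => //.
    by exfalso; apply: nx; exists s.
  by have [t [St ct]] := cdown s x Ss h; exfalso; apply: nx; exists t.
move=> s t Ss St cst; have [h|[h|h]] := swo_total swo s t => //.
  by have := cmono t s St Ss h; rewrite cst => /(swo_irr swo).
by have := cmono s t Ss St h; rewrite cst => /(swo_irr swo).
Qed.
End Collapse.

Lemma ceq_le1 T U (A : set T) (B : set U) : A #= B -> A #<= B.
Proof. by move=> /card_eqPle []. Qed.
Lemma ceq_le2 T U (A : set T) (B : set U) : A #= B -> B #<= A.
Proof. by move=> /card_eqPle []. Qed.

Section Cof.
Variables (I : Type) (lt : I -> I -> Prop).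
Hypothesis swo : strict_wellorder lt.
Variable i0 : I.
Hypothesis nomax : forall x, exists y, lt x y.

Let le x y := lt x y \/ x = y.

Lemma le_trans' x y z : le x y -> le y z -> le x z.
Proof.
move=> [h1|->] [h2|<-]; rewrite /le; auto; left; exact: swo_trans h1 h2.
Qed.

Lemma lt_of_le_lt x y z : le x y -> lt y z -> lt x z.
Proof. by move=> [h1|->] h2 //; exact: swo_trans h1 h2. Qed.

Lemma cof_regular : exists (K : Type) (ltK : K -> K -> Prop) (phi : K -> I),
  regular_cardinal ltK /\ [set: K] #<= [set: I] /\
  (forall i j, ltK i j -> lt (phi i) (phi j) \/ phi i = phi j) /\
  (forall v, exists k, lt v (phi k) \/ v = phi k).
Proof.
pose cof (S : set I) := forall v, exists s, S s /\ le v s.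
pose Q u := exists S, cof S /\ S #<= below lt u.
have [u [Qu minu]] : exists u, Q u /\ forall x, below lt u x -> ~ Q (Some x).
  have [H|H] := pselect (exists x, Q (Some x)).
    have [h1 h2] := least_spec swo i0 H.
    by exists (Some (least swo (fun x => Q (Some x)) i0)); split.
  exists None; split; last by move=> x _ Qx; apply: H; exists x.
  exists setT; split; last exact: subset_card_le.
  by move=> v; exists v; split => //; right.
have [S [cofS SuB]] := Qu.
pose K := below lt u.
pose ltK (a b : K) := lt (val a) (val b).
have cardK : [set: K] #= below lt u := card_setT _.
have nxt : forall x, exists y, S y /\ lt x y.
  move=> x; have [z xz] := nomax x; have [s [Ss zs]] := cofS z.
  exists s; split => //; case: zs => [zs|<-] //; exact: swo_trans xz zs.
have [f fP] := choice nxt.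
pose g n := iter n.+1 f i0.
have gS : forall n, S (g n) by move=> n; rewrite /g iterS; case: (fP (iter n f i0)).
have ginc : forall n m, (n < m)%N -> lt (g n) (g m).
  move=> n; elim => // m IH; rewrite ltnS leq_eqVlt => /orP [/eqP ->|/IH h].
    by have [] := fP (g m).
  by apply: swo_trans h _; have [] := fP (g m).
have natS : [set: nat] #<= S.
  apply: (@card_le_fun _ _ _ _ g) => // n m _ _ gnm.
  have [h|h|//] := ltngtP n m.
    by have := ginc _ _ h; rewrite gnm => /(swo_irr swo).
  by have := ginc _ _ h; rewrite gnm => /(swo_irr swo).
have infK : infinite_set [set: K].
  apply/infiniteP; apply: card_le_trans natS _.
  apply: card_le_trans SuB _; exact: ceq_le2 cardK.
have := @card_le_getfun _ _ S (below lt u) i0 SuB.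
case=> iota [iotaB iotainj].
pose D := iota @` S.
pose h y := epsd i0 (fun s => S s /\ iota s = y).
have hiota : forall s, S s -> h (iota s) = s.
  move=> s Ss; have [S' E] : S (h (iota s)) /\ iota (h (iota s)) = iota s.
    exact: (@epsd_spec _ i0 (fun s0 => S s0 /\ iota s0 = iota s) (ex_intro _ s (conj Ss erefl))).
  exact: iotainj.
have hcof : forall v, exists d, D d /\ le v (h d).
  move=> v; have [s [Ss vs]] := cofS v; exists (iota s); split.
    by exists s.
  by rewrite hiota.
pose R d := D d /\ forall d', D d' -> lt d' d -> lt (h d') (h d).
have Rcof : forall v, exists r, R r /\ le v (h r).
  move=> v; have [d [[Dd vd] mind]] := wf_min (swo_wf swo) (hcof v).
  exists d; split => //; split => // d' Dd' ltd.
  have nle := mind d' ltd.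
  have [h1|[h1|h1]] := swo_total swo (h d') v.
  - by case: vd => [vd|<-] //; exact: swo_trans h1 vd.
  - by exfalso; apply: nle; split => //; right.
  - by exfalso; apply: nle; split => //; left.
have RsubB : forall r, R r -> below lt u r.
  by move=> r [[s Ss <-] _]; apply: iotaB.
have Runb : forall x, below lt u x -> exists r, R r /\ le x r.
  move=> x bx; apply: contrapT => H; apply: (minu x bx).
  exists (h @` R); split.
    move=> v; have [r [Rr vr]] := Rcof v; exists (h r); split; [by exists r | done].
  apply: card_le_trans (card_image_le _ _) _; apply: subset_card_le => r Rr /=.
  have [h1|[h1|h1]] := swo_total swo r x => //.
    by exfalso; apply: H; exists r; split => //; right.
  by exfalso; apply: H; exists r; split => //; left.
pose rk (k : K) := least swo (fun r => R r /\ le (val k) r) i0.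
have rkP : forall k, (R (rk k) /\ le (val k) (rk k)) /\
    forall y, lt y (rk k) -> ~ (R y /\ le (val k) y).
  move=> k; apply: least_spec; apply: Runb; exact: set_mem (valP k).
pose phi (k : K) := h (rk k).
have phimono : forall i j, ltK i j -> lt (phi i) (phi j) \/ phi i = phi j.
  move=> i j lij; have [[Ri li] _] := rkP i; have [[Rj lj] _] := rkP j.
  have : le (rk i) (rk j).
    apply: least_le; split => //; left.
    by case: lj => [lj|<-]; [exact: (swo_trans swo (lij : lt (val i) (val j)) lj)|exact: lij].
  move=> [lr|e]; last by right; rewrite /phi e.
  left; rewrite /phi; case: Rj => _ ; apply => //; by case: Ri.
have phicof : forall v, exists k, le v (phi k).
  move=> v; have [r [Rr vr]] := Rcof v.
  exists (exist _ r (mem_set (RsubB r Rr))).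
  set k := exist _ _ _.
  have [[Rk lk] mk] := rkP k.
  have : rk k = r.
    case: lk => [lk|//]; by exfalso; apply: (mk r lk); split => //; right.
  by rewrite /phi => ->.
exists K, ltK, phi; split; last first.
  split; first by apply: card_le_trans (ceq_le1 cardK) _; apply: subset_card_le.
  by split.
split; first exact: swo_sub.
split; first exact: infK.
split.
  move=> i H; apply: (minu (val i)); first exact: set_mem (valP i).
  exists S; split => //.
  apply: card_le_trans SuB _; apply: card_le_trans (ceq_le2 cardK) _.
  apply: card_le_trans H _.
  apply: (@card_le_fun _ _ _ _ val) => //= a b _ _; exact: val_inj.
move=> S' HS'.
have [H|[x [bx H]]] := key swo u (val @` S').
  apply: card_le_trans (ceq_le1 cardK) _.
  apply: card_le_trans H _; exact: card_image_le.
exfalso; apply: (minu x bx); exists (phi @` S'); split.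
  move=> v; have [k vk] := phicof v; have [j S'j nkj] := HS' k.
  exists (phi j); split; first by exists j.
  apply: le_trans' vk _.
  have [h1|[h1|h1]] := swo_total swo (val k) (val j).
  - exact: phimono.
  - by right; rewrite (val_inj h1).
  - by exfalso; apply: nkj.
apply: card_le_trans (card_image_le _ _) _.
apply: card_le_trans H.
apply: ceq_le2; apply: inj_card_eq => a b _ _; exact: val_inj.
Qed.
End Cof.

Lemma wo_to_swo (T : eqType) (R : rel T) : well_order R ->
  strict_wellorder (fun x y => R x y /\ x <> y).
Proof.
move=> wo.
have minP : forall (P : pred T) x, P x -> exists z, P z /\
    (forall y, P y -> R z y) /\
    (forall z', P z' -> (forall y, P y -> R z' y) -> z' = z).
  move=> P x Px; have [z [[Pz lz] uz]] := wo P (ex_intro _ x Px).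
  exists z; split => //; split; first by move=> y Py; apply: lz.
  move=> z' Pz' lz'; symmetry; apply: uz; split => // y Py; exact: lz'.
have refl : forall x, R x x.
  move=> x; have [z [/eqP -> [h _]]] := minP (pred1 x) x (eqxx x).
  by apply: h; rewrite /= eqxx.
have antis : forall x y, R x y -> R y x -> x = y.
  move=> x y xy yx; have [z [_ [_ u]]] := minP (pred2 x y) x ltac:(by rewrite /= eqxx).
  have -> : x = z.
    apply: u; first by rewrite /= eqxx.
    by move=> w /orP [/eqP ->|/eqP ->].
  symmetry; apply: u; first by rewrite /= eqxx orbT.
  by move=> w /orP [/eqP ->|/eqP ->].
have total : forall x y, R x y \/ R y x.
  move=> x y; have [z [/orP [/eqP ->|/eqP ->] [h _]]] :=
    minP (pred2 x y) x ltac:(by rewrite /= eqxx).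
    by left; apply: h; rewrite /= eqxx orbT.
  by right; apply: h; rewrite /= eqxx.
have trans : forall x y z, R x y -> R y z -> R x z.
  move=> x y z xy yz.
  have [m [Pm [h _]]] := minP (pred3 x y z) x ltac:(by rewrite /= eqxx).
  move: Pm => /or3P [/eqP mx|/eqP my|/eqP mz].
  - by rewrite -mx; apply: h; rewrite /= eqxx !orbT.
  - have yx : R y x by rewrite -my; apply: h; rewrite /= eqxx.
    by rewrite (antis _ _ xy yx).
  - have zy : R z y by rewrite -mz; apply: h; rewrite /= eqxx !orbT.
    by rewrite -(antis _ _ yz zy).
split.
  move=> x; apply: contrapT => nacc.
  pose Pa := [pred y | ~~ `[< Acc (fun x y => R x y /\ x <> y) y >]].
  have Pax : Pa x by apply/negP => /asboolP.
  have [m [Pm [h _]]] := minP Pa x Pax.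
  move: Pm => /negP; apply; apply/asboolP; constructor => y [ym nym].
  apply: contrapT => nay.
  have my : R m y by apply: h; apply/negP => /asboolP.
  exact: nym (antis _ _ ym my).
split.
  move=> x y z [xy nxy] [yz nyz]; split; first exact: trans xy yz.
  by move=> exz; subst z; apply: nxy; apply: antis.
move=> x y; have [->|nxy] := pselect (x = y); first by right; left.
by have [h|h] := total x y; [left|right; right]; split => // /esym.
Qed.

Lemma init_wo (B : set (set nat)) (X0 : set nat) : B X0 ->
  exists (W : Type) (ltW : W -> W -> Prop) (b : W -> set nat),
  strict_wellorder ltW /\ (forall w, B (b w)) /\
  (forall X, B X -> exists w, b w = X) /\ [set: W] #<= B /\
  forall w, ~ (B #<= [set v | ltW v w]).
Proof.
move=> BX0.
have [R wo] := well_ordering_principle (set nat).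
pose lt x y := R x y /\ x <> y.
have swo : strict_wellorder lt := wo_to_swo wo.
pose P x := B #<= [set v | B v /\ lt v x].
have [C [CB [BC nP]]] : exists C, C `<=` B /\ B #<= C /\ forall x, C x -> ~ P x.
  have [H|H] := pselect (exists x, P x).
    have [h1 h2] := least_spec swo X0 H.
    exists [set v | B v /\ lt v (least swo P X0)]; split; first by move=> v [].
    by split => // x [_ lx]; apply: h2.
  exists B; split => //; split => // x _ Px; apply: H; by exists x.
have := @card_le_getfun _ _ B C X0 BC; case=> j [jC jinj].
pose W := C.
pose ltW (a b : W) := lt (val a) (val b).
pose b (w : W) := epsd X0 (fun X => B X /\ j X = val w).
exists W, ltW, b; split; first exact: swo_sub.
split.
  move=> w; rewrite /b /epsd; case: pselect => // H.
  by case: (proj2_sig (cid H)).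
split.
  move=> X BX; exists (exist _ (j X) (mem_set (jC X BX))).
  have [h1 h2] := @epsd_spec _ X0 (fun Y => B Y /\ j Y = j X) (ex_intro _ X (conj BX erefl)).
  exact: jinj h1 BX h2.
split.
  apply: card_le_trans (ceq_le1 (card_setT _)) _; exact: subset_card_le.
move=> w H; apply: (nP (val w)); first exact: set_mem (valP w).
apply: card_le_trans H _.
apply: (@card_le_fun _ _ _ _ val).
  move=> v /= lvw; split; [apply: CB; exact: set_mem (valP v)| exact: lvw].
by move=> a c _ _; apply: val_inj.
Qed.

Lemma construct (B : set (set nat)) : p_lt_t_wrt B -> exemplifies_p B ->
  exists (I : Type) (lt : I -> I -> Prop) (A : I -> set nat) (i0 : I),
  strict_wellorder lt /\ (forall x, exists y, lt x y) /\
  [set: I] #<= B /\ ~ (B #<= [set: I]) /\ starDecreasing lt A /\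
  (forall i X, B X -> infinite_set (A i `&` X)) /\
  (forall Y, pseudo_int Y (range A) -> exists2 X, B X & finite_set (Y `&` X)).
Proof.
move=> hpt [Binf [Bcap [Bnp _]]].
have infT : infinite_set [set: nat] by apply/infiniteP.
have [X0 BX0] : exists X0, B X0.
  apply: contrapT => H; apply: Bnp; exists setT; split => // X BX.
  by exfalso; apply: H; exists X.
have [W [ltW [b [swoW [bB [bsurj [WB Winit]]]]]]] := init_wo BX0.
pose good (Y : set nat) := forall X, B X -> infinite_set (Y `&` X).
pose gp w (f : W -> set nat) Y := infsub Y /\
  (forall v, ltW v w -> subseteq_star Y (f v)) /\ good Y.
pose F w f := epsd set0 (gp w f) `&` b w.
have Fext : forall w f g, (forall v, ltW v w -> f v = g v) -> F w f = F w g.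
  move=> w f g fg; rewrite /F; congr (epsd _ _ `&` _).
  apply: funext => Y; apply: propext; rewrite /gp; split.
    by move=> [h1 [h2 h3]]; split => //; split => // v lv; rewrite -fg //; apply: h2.
  by move=> [h1 [h2 h3]]; split => //; split => // v lv; rewrite fg //; apply: h2.
have [A AE] := wf_rec (swo_wf swoW) (fun _ => set0) Fext.
have goodcap : forall Y Z, good Y -> B Z -> good (Y `&` Z).
  by move=> Y Z gY BZ X BX; rewrite -setIA; apply: gY; apply: Bcap.
have goodinf : forall Y, good Y -> infsub Y.
  move=> Y gY; apply: (@sub_infinite_set _ (Y `&` X0)); last exact: gY.
  by move=> x [].
have Asub : forall w, A w `<=` b w by move=> w; rewrite AE => x [].
have C1 : forall w, (exists Y, gp w A Y) -> good (A w) /\ infsub (A w) /\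
    forall v, ltW v w -> subseteq_star (A w) (A v).
  move=> w H; have [iY [sY gY]] := epsd_spec set0 H.
  have gA : good (A w) by rewrite AE; apply: goodcap.
  split => //; split; first exact: goodinf.
  move=> v lv; apply: sstar_trans (sY v lv); apply: sstar_sub.
  by rewrite AE => x [].
have [[w nw]|Hall] := pselect (exists w, ~ exists Y, gp w A Y); last first.
  have Hall' : forall w, exists Y, gp w A Y.
    by move=> w; apply: contrapT => nw; apply: Hall; exists w.
  exfalso; have [[Y [iY hY]]|nps] := pselect (has_pseudo_int (range A)).
    apply: Bnp; exists Y; split => // X BX; have [w <-] := bsurj X BX.
    apply: sstar_trans (hY (A w) _) (sstar_sub (Asub w)); by exists w.
  apply: (hpt W ltW A); last exact: WB.
  split => //; split => //; split.
    by move=> w; have [_ [h _]] := C1 w (Hall' w).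
  by move=> v w lv; have [_ [_ h]] := C1 w (Hall' w); apply: h.
have [ws [bad minws]] := @wf_min _ _ (fun w => ~ exists Y, gp w A Y) (swo_wf swoW) (ex_intro _ w nw).
have okv : forall v, ltW v ws -> exists Y, gp v A Y.
  by move=> v lv; apply: contrapT; apply: minws.
pose I := [set v | ltW v ws].
pose lt (a c : I) := ltW (val a) (val c).
have [v0 lv0] : exists v, ltW v ws.
  apply: contrapT => H; apply: bad; exists setT; split => //; split.
    by move=> v lv; exfalso; apply: H; exists v.
  by move=> X BX; rewrite setTI; apply: Binf.
exists I, lt, (fun i => A (val i)), (exist _ v0 (mem_set lv0)).
have valI : forall i : I, ltW (val i) ws by move=> i; exact: set_mem (valP i).
split; first exact: swo_sub.
split.
  move=> x; apply: contrapT => H; apply: bad; exists (A (val x)).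
  have [gA [iA dA]] := C1 _ (okv _ (valI x)).
  split => //; split => // v lv.
  have [h|[h|h]] := swo_total swoW v (val x).
  - by apply: dA.
  - by rewrite h; apply: sstar_sub.
  - by exfalso; apply: H; exists (exist _ v (mem_set lv)).
split.
  apply: card_le_trans (ceq_le1 (card_setT _)) _.
  apply: card_le_trans WB; exact: subset_card_le.
split.
  move=> H; apply: (Winit ws); apply: card_le_trans H _.
  exact: ceq_le1 (card_setT _).
split.
  split.
    by move=> i; have [_ [h _]] := C1 _ (okv _ (valI i)).
  by move=> i j lij; have [_ [_ h]] := C1 _ (okv _ (valI j)); apply: h.
split.
  by move=> i X BX; have [h _] := C1 _ (okv _ (valI i)); apply: h.
move=> Y [iY hY]; apply: contrapT => H; apply: bad; exists Y.
split => //; split.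
  move=> v lv; apply: hY; by exists (exist _ v (mem_set lv)).
by move=> X BX fin; apply: H; exists X.
Qed.

Theorem proposition2p3 (B : set (set nat)) :
  p_lt_t_wrt B -> exemplifies_p B ->
  exists (K : Type) (ltK : K -> K -> Prop) (A : K -> set nat),
    regular_cardinal ltK /\
    ([set: K] #<= B /\ ~ (B #<= [set: K])) /\
    starDecreasing ltK A /\
    (forall i X, B X -> infinite_set (A i `&` X)) /\
    (forall Y, pseudo_int Y (range A) -> exists2 X, B X & finite_set (Y `&` X)).
Proof.
move=> hpt hB.
have [I [lt [A [i0 [swo [nomax [IB [nBI [[Ainf Adec] [Ha Hb]]]]]]]]]] :=
  construct hpt hB.
have [K [ltK [phi [reg [KI [phimono phicof]]]]]] := cof_regular swo i0 nomax.
exists K, ltK, (fun k => A (phi k)); split => //.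
split.
  split; first exact: card_le_trans KI IB.
  by move=> H; apply: nBI; apply: card_le_trans H KI.
split.
  split; first by move=> k; apply: Ainf.
  move=> i j lij; have [h|h] := phimono i j lij.
    exact: Adec.
  by rewrite h; apply: sstar_sub.
split; first by move=> i X BX; apply: Ha.
move=> Y [iY hY]; apply: Hb; split => // _ [v _ <-].
have [k vk] := phicof v.
apply: sstar_trans (hY (A (phi k)) _) _; first by exists k.
case: vk => [h|->]; [exact: Adec | exact: sstar_sub].
Qed.
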